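(* For $j\in\mathbb{Z}_{\ge0}$, \[ C_j(x)=\frac{q^{-1}\lambda}{1+q^{-1}x}B_j(x)+\frac{\beta_E(j)\beta_E(j+1)-q^{-1}\lambda\,\beta_E(j)^2}{1+q^{-1}x}, \] where $B_j(x)=\sum_{l\ge0}\beta_E(l+j)^2x^l$ and $C_j(x)=\sum_{l\ge0}\beta_E(l+j+1)\beta_E(l+j)x^l$ (formal power series in $x$).
   Context: $F$ is a $p$-adic field with odd residue cardinality $q$, uniformizer $\varpi$. $\pi$ is an irreducible unitary unramified representation of $\mathrm{GL}_2(F)$ with trivial central character, a quotient of $\chi\times\chi^{-1}$ with $\chi$ unramified; $\alpha=\chi(\varpi)$ and $\lambda=q^{1/2}(\alpha+\alpha^{-1})\in\mathbb{R}$. $\phi$ is the spherical unit vector, $E$ a quadratic étale algebra over $F$, $\alpha_E(\phi_1,\phi_2)=\int_{F^\times\backslash E^\times}\langle\pi(t)\phi_1,\phi_2\rangle d^\times t$ with $\alpha_E(\phi,\phi)\ne0$, and $\beta_E(l)=\alpha_E(\pi(\mathrm{diag}(\varpi^{-l},1))\phi,\phi)/\alpha_E(\phi,\phi)$. These satisfy $q\beta_E(l+2)-\lambda\beta_E(l+1)+\beta_E(l)=0$ for $l\ge0$, $\beta_E(0)=1$. *)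

(* Defs.v *)
From HB Require Import structures.
From mathcomp Require Import all_boot all_order all_algebra.
Set Implicit Arguments. Unset Strict Implicit. Unset Printing Implicit Defensive.
Import Order.TTheory GRing.Theory Num.Theory.
Local Open Scope ring_scope.

(* Formal power series in one variable x over a field K, represented by their
   coefficient sequences: f = \sum_l f l * x^l. *)
Definition fps (K : fieldType) := nat -> K.

Definition fps_add (K : fieldType) (f g : fps K) : fps K := fun n => f n + g n.

Definition fps_mul (K : fieldType) (f g : fps K) : fps K :=
  fun n => \sum_(k < n.+1) f k * g (n - k)%N.

Definition fps_const (K : fieldType) (c : K) : fps K :=
  fun n => if n == 0%N then c else 0.
Definition fps_X (K : fieldType) : fps K := fun n => if n == 1%N then 1 else 0.

Definition fps_scale (K : fieldType) (c : K) (f : fps K) : fps K := fun n => c * f n.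

(* Multiplicative inverse of a series with invertible constant term:
   b_0 = a_0^-1, b_n = - a_0^-1 * \sum_{k=1}^n a_k b_{n-k}.
   inv_seq a n is the list [b_0; ...; b_n]. *)
Fixpoint inv_seq (K : fieldType) (a : fps K) (n : nat) : seq K :=
  match n with
  | 0 => [:: (a 0%N)^-1]
  | m.+1 => let s := inv_seq a m in
            rcons s (- (a 0%N)^-1 *
                       \sum_(k < m.+1) a k.+1 * nth 0 s (m - k)%N)
  end.

Definition fps_inv (K : fieldType) (a : fps K) : fps K :=
  fun n => nth 0 (inv_seq a n) n.

Definition fps_div (K : fieldType) (f g : fps K) : fps K := fps_mul f (fps_inv g).

Definition Bser (K : fieldType) (beta : nat -> K) (j : nat) : fps K :=
  fun l => beta (l + j)%N ^+ 2.
Definition Cser (K : fieldType) (beta : nat -> K) (j : nat) : fps K :=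
  fun l => beta (l + j).+1 * beta (l + j)%N.

(* Main.v *)
Require Import Defs.
From HB Require Import structures.
From mathcomp Require Import all_boot all_order all_algebra.
From mathcomp Require Import ring.
From Stdlib Require Import FunctionalExtensionality.
Import Order.TTheory GRing.Theory Num.Theory.
Local Open Scope ring_scope.

Lemma inv_den (K : fieldType) (c : K) n :
  inv_seq (fps_add (fps_const 1) (fps_scale c (@fps_X K))) n =
  mkseq (fun i => (-c) ^+ i) n.+1.
Proof.
elim: n => [|m IH].
  by rewrite /= /fps_add /fps_const /fps_scale /fps_X /= mulr0 addr0 invr1.
rewrite [inv_seq _ m.+1]/= IH [RHS]mkseqS; congr rcons.
rewrite big_ord_recl big1 ?addr0; last first.
  by move=> i _; rewrite /fps_add /fps_const /fps_scale /fps_X /= mulr0 addr0 mul0r.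
rewrite /fps_add /fps_const /fps_scale /fps_X /= mulr0 addr0 invr1 mulr1.
rewrite subn0 nth_mkseq // exprS.
by rewrite add0r mulN1r mulNr.
Qed.

Lemma div_den (K : fieldType) (c : K) f n :
  fps_div f (fps_add (fps_const 1) (fps_scale c (@fps_X K))) n =
  \sum_(k < n.+1) f k * (-c) ^+ (n - k).
Proof.
rewrite /fps_div /fps_mul; apply: eq_bigr => k _.
by rewrite /fps_inv inv_den nth_mkseq // ltnS leq_subr.
Qed.

Lemma keyl (K : fieldType) (qi lam c : K) (beta : nat -> K) j
  (hrec : forall m, beta m.+2 = qi * (lam * beta m.+1 - beta m))
  (hc : c = beta j * beta j.+1 - qi * lam * beta j ^+ 2) n :
  Cser beta j n = \sum_(i < n.+1)
   (fps_scale (qi * lam) (Bser beta j) i + fps_const c i) * (- qi) ^+ (n - i).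
Proof.
elim: n => [|n IH].
  rewrite big_ord1 subn0 expr0 mulr1 /fps_scale /fps_const /Cser /Bser add0n eqxx.
  by rewrite hc; ring.
rewrite big_ord_recr /= subnn expr0 mulr1.
have -> : \sum_(i < n.+1) (fps_scale (qi * lam) (Bser beta j) (widen_ord (leqnSn n.+1) i) +
      fps_const c (widen_ord (leqnSn n.+1) i)) * (- qi) ^+ (n.+1 - widen_ord (leqnSn n.+1) i)
   = (- qi) * Cser beta j n.
  rewrite IH mulr_sumr; apply: eq_bigr => i _.
  rewrite -[nat_of_ord (widen_ord _ i)]/(nat_of_ord i) subSn ?exprS; last exact: ltn_ord i.
  ring.
rewrite /fps_scale /fps_const /Cser /Bser addSn /= (hrec (n + j)%N).
ring.
Qed.

Theorem lemma4p2 (C : numClosedFieldType) (q : nat) (lam : C) (beta : nat -> C) :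
  (exists p k : nat, prime p /\ q = (p ^ k.+1)%N) -> odd q ->
  lam \is Num.real ->
  beta 0%N = 1 ->
  (forall l : nat, q%:R * beta l.+2 - lam * beta l.+1 + beta l = 0) ->
  forall j : nat,
    let qi := (q%:R : C)^-1 in
    let den := fps_add (fps_const 1) (fps_scale qi (@fps_X C)) in
    Cser beta j =
    fps_add
      (fps_div (fps_scale (qi * lam) (Bser beta j)) den)
      (fps_div (fps_const (beta j * beta j.+1 - qi * lam * beta j ^+ 2)) den).
Proof.
move=> [p [k [pp ->]]] _ _ _ H j qi den.
have hq : ((p ^ k.+1)%N%:R : C) != 0.
  by rewrite pnatr_eq0 -lt0n expn_gt0 prime_gt0.
have hrec : forall m, beta m.+2 = qi * (lam * beta m.+1 - beta m).
  move=> m; have E : (p ^ k.+1)%N%:R * beta m.+2 = lam * beta m.+1 - beta m.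
    transitivity ((p ^ k.+1)%N%:R * beta m.+2 - lam * beta m.+1 + beta m + (lam * beta m.+1 - beta m)).
      by ring.
    by rewrite H add0r.
  by rewrite -E mulrA mulVf // mul1r.
apply: functional_extensionality => n.
rewrite /fps_add /den !div_den (@keyl _ _ _ _ _ _ hrec erefl).
under eq_bigr => i _ do rewrite mulrDl.
by rewrite big_split.
Qed.
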